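(* Let $G$ be a torsion abelian group (with the discrete topology), let $\widehat G$ be its Pontryagin dual (a totally disconnected, i.e. $0$-dimensional, compact abelian group), and let $\varphi\colon G\to G$ be an endomorphism with dual endomorphism $\widehat\varphi\colon\widehat G\to\widehat G$, $\widehat\varphi(\chi)=\chi\circ\varphi$. Then $\varphi$ is (algebraically) positively expansive if and only if $\widehat\varphi$ is topologically positively expansive. Moreover, if $\varphi$ is an automorphism, then $\varphi$ is (algebraically) expansive if and only if $\widehat\varphi$ is topologically expansive.
   Context: All groups are abelian; $\mathbb N=\{0,1,2,\dots\}$. An endomorphism $\varphi\colon G\to G$ is (algebraically) positively expansive if there is a finite subgroup $S\leq G$ such that for every finite subgroup $F\leq G$ there is $n\in\mathbb N$ with $F\subseteq\sum_{k=0}^n\varphi^kS$. An automorphism $\varphi$ is (algebraically) expansive if there is a finite subgroup $S\leq G$ such that for every finite subgroup $F\leq G$ there is $n\in\mathbb N$ with $F\subseteq\sum_{|k|\leq n}\varphi^kS$. A continuous endomorphism $\psi$ of a compact group $K$ with identity $e$ is topologically positively expansive if there is a neighborhood $U$ of $e$ with $\bigcap_{k\in\mathbb N}\psi^{-k}(U)=\{e\}$; a continuous automorphism $\psi$ is topologically expansive if there is a neighborhood $U$ of $e$ with $\bigcap_{k\in\mathbb Z}\psi^{-k}(U)=\{e\}$. *)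

(* Defs.v *)
From mathcomp Require Import all_boot all_algebra complex reals.
Set Implicit Arguments. Unset Strict Implicit. Unset Printing Implicit Defensive.
Import GRing.Theory Num.Theory.
Local Open Scope ring_scope.

Definition torsion (G : zmodType) : Prop :=
  forall x : G, exists2 n : nat, (0 < n)%N & x *+ n = 0.

Definition finite_subgroup (G : zmodType) (S : G -> Prop) : Prop :=
  [/\ S 0, (forall x y, S x -> S y -> S (x - y))
    & exists s : seq G, forall x, S x <-> x \in s].

Definition in_pos_trajectory (G : zmodType) (phi : G -> G) (S : G -> Prop)
    (n : nat) (x : G) : Prop :=
  exists s : nat -> G, (forall k, (k <= n)%N -> S (s k)) /\
    x = \sum_(k < n.+1) iter k phi (s k).

(* x \in sum_{|k|<=n} phi^k S, phi^{-1} = phiinv *)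
Definition in_trajectory (G : zmodType) (phi phiinv : G -> G) (S : G -> Prop)
    (n : nat) (x : G) : Prop :=
  exists s t : nat -> G, (forall k, (k <= n)%N -> S (s k) /\ S (t k)) /\
    x = \sum_(k < n.+1) iter k phi (s k)
        + \sum_(1 <= k < n.+1) iter k phiinv (t k).

Definition alg_pos_expansive (G : zmodType) (phi : G -> G) : Prop :=
  exists2 S : G -> Prop, finite_subgroup S &
    forall F : G -> Prop, finite_subgroup F ->
      exists n : nat, forall x, F x -> in_pos_trajectory phi S n x.

Definition alg_expansive (G : zmodType) (phi phiinv : G -> G) : Prop :=
  exists2 S : G -> Prop, finite_subgroup S &
    forall F : G -> Prop, finite_subgroup F ->
      exists n : nat, forall x, F x -> in_trajectory phi phiinv S n x.

(* chi is a character of G (continuous automatically, G discrete) *)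
Definition is_character (R : realType) (G : zmodType) (chi : G -> R[i]) : Prop :=
  (forall x, `|chi x| = 1) /\ (forall x y, chi (x + y) = chi x * chi y).

Definition triv_char (R : realType) (G : zmodType) : G -> R[i] := fun _ => 1.

(* U is a neighbourhood of the trivial character in the dual group, whose
   topology (compact-open = pointwise convergence since G is discrete) has
   basic neighbourhoods {chi | forall x in F, |chi x - 1| < eps} *)
Definition dual_nbhs_e (R : realType) (G : zmodType) (U : (G -> R[i]) -> Prop)
  : Prop :=
  exists (F : seq G) (eps : R), 0 < eps /\
    forall chi, is_character chi ->
      (forall x, x \in F -> `|chi x - 1| < (eps%:C)%C) -> U chi.

Definition dual_map (R : realType) (G : zmodType) (phi : G -> G)
  (chi : G -> R[i]) : G -> R[i] := fun x => chi (phi x).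

Definition top_pos_expansive (R : realType) (G : zmodType) (phi : G -> G)
  : Prop :=
  exists2 U : (G -> R[i]) -> Prop, dual_nbhs_e U &
    forall chi, is_character chi ->
      ((forall k : nat, U (iter k (dual_map phi) chi)) <-> chi = @triv_char R G).

Definition top_expansive (R : realType) (G : zmodType) (phi phiinv : G -> G)
  : Prop :=
  exists2 U : (G -> R[i]) -> Prop, dual_nbhs_e U &
    forall chi, is_character chi ->
      ((forall k : nat, U (iter k (dual_map phi) chi)
                     /\ U (iter k (dual_map phiinv) chi))
       <-> chi = @triv_char R G).

(* Main.v *)
Require Import Defs.
From mathcomp Require Import all_boot all_algebra complex reals.
From mathcomp Require boolp classical_sets.
From mathcomp Require Import order.
Local Open Scope ring_scope.
Import Order.TTheory GRing.Theory Num.Theory.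

Section Infra.
Set Implicit Arguments. Unset Strict Implicit.
Variables (R : realType) (G : zmodType).
Implicit Types (H T : G -> Prop) (f chi : G -> R[i]).

Definition subgrp H := H 0 /\ forall a b, H a -> H b -> H (a - b).

Lemma subgrpN H a : subgrp H -> H a -> H (- a).
Proof. by move=> [H0 Hs] Ha; rewrite -sub0r; apply: Hs. Qed.

Lemma subgrpD H a b : subgrp H -> H a -> H b -> H (a + b).
Proof. by move=> sH Ha Hb; rewrite -[b]opprK; apply: sH.2 => //; apply: subgrpN. Qed.

Lemma subgrpMn H a m : subgrp H -> H a -> H (a *+ m).
Proof. by move=> sH Ha; elim: m => [|m IH]; [rewrite mulr0n; case: sH | rewrite mulrS; apply: subgrpD]. Qed.

Definition pchar H f :=
  [/\ subgrp H, (forall a b, H a -> H b -> f (a + b) = f a * f b)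
    & (forall a, H a -> `|f a| = 1)].

Lemma pchar0 H f : pchar H f -> f 0 = 1.
Proof.
rewrite /pchar => -[[H0 _] hom nrm]; have := hom 0 0 H0 H0; rewrite addr0 => e.
have nz : f 0 != 0 by rewrite -normr_eq0 (nrm _ H0) oner_eq0.
by apply: (mulfI nz); rewrite mulr1 -e.
Qed.

Lemma pcharMn H f a m : pchar H f -> H a -> f (a *+ m) = f a ^+ m.
Proof.
move=> pc Ha; elim: m => [|m IH]; first by rewrite mulr0n expr0 (pchar0 pc).
case: (pc) => sH hom _.
by rewrite mulrS exprS hom ?IH //; apply: subgrpMn.
Qed.

Lemma char_pchar chi : is_character chi -> pchar (fun _ => True) chi.
Proof. by case=> n h; split => //; split. Qed.

Lemma char0 chi : is_character chi -> chi 0 = 1.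
Proof. by move/char_pchar/pchar0. Qed.

Lemma charMn chi a m : is_character chi -> chi (a *+ m) = chi a ^+ m.
Proof. by move/char_pchar=> pc; apply: (@pcharMn _ chi a m pc). Qed.

Lemma char_sum chi I (r : seq I) (F : I -> G) : is_character chi ->
  chi (\sum_(i <- r) F i) = \prod_(i <- r) chi (F i).
Proof.
move=> hc; elim: r => [|x r IH]; first by rewrite !big_nil char0.
by case: (hc) => _ hom; rewrite !big_cons hom IH.
Qed.


Lemma torsion_opp (tor : torsion G) (y : G) m : exists m', y *+ m + y *+ m' = 0.
Proof.
case: (tor y) => n n0 yn; exists (m * n.-1)%N.
by rewrite -mulrnDr -{1}[m]muln1 -mulnDr add1n prednK // mulnC mulrnA yn mul0rn.
Qed.

Lemma ext_step (tor : torsion G) H f y d w :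
  pchar H f -> (0 < d)%N -> H (y *+ d) -> (forall k, (0 < k < d)%N -> ~ H (y *+ k)) ->
  `|w| = 1 -> w ^+ d = f (y *+ d) ->
  exists H' f', [/\ pchar H' f', (forall a, H a -> H' a),
    (forall a, H a -> f' a = f a), H' y & f' y = w].
Proof.
move=> pc d0 Hyd dmin nw wd_eq.
case: (pc) => sH hom nrm.
have wd : forall h h' m m', H h -> H h' -> h + y *+ m = h' + y *+ m' ->
    f h * w ^+ m = f h' * w ^+ m'.
  suff aux : forall h h' m m', (m <= m')%N -> H h -> H h' -> h + y *+ m = h' + y *+ m' ->
      f h * w ^+ m = f h' * w ^+ m'.
    move=> h h' m m' Hh Hh' e; case: (leqP m m') => lm; first exact: aux.
    by symmetry; apply: aux => //; apply: ltnW.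
  move=> h h' m m' lm Hh Hh' e.
  rewrite -(subnKC lm) in e *; set k := (m' - m)%N in e *.
  have ehk : h = h' + y *+ k.
    by apply: (addIr (y *+ m)); rewrite e mulrnDr addrA addrAC.
  have ek : y *+ k = (y *+ d) *+ (k %/ d)%N + y *+ (k %% d)%N.
    by rewrite {1}(divn_eq k d) mulrnDr mulnC mulrnA.
  have r0 : (k %% d = 0)%N.
    apply/eqP; rewrite eqn0Ngt; apply/negP => r0.
    have D := dmin (k %% d)%N; apply: D; first by rewrite r0 ltn_pmod.
    have -> : y *+ (k %% d)%N = (h - h') - (y *+ d) *+ (k %/ d)%N.
      by rewrite ehk ek [h' + _]addrC addrK addrC addKr.
    by apply: sH.2; [apply: sH.2 | apply: subgrpMn].
  rewrite r0 addr0 in ek.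
  rewrite ehk ek hom //; last by apply: subgrpMn.
  rewrite (@pcharMn H f (y *+ d) (k %/ d)%N pc) // -wd_eq -exprM -mulrA -exprD.
  by rewrite {2}(divn_eq k d) r0 addn0 mulnC addnC.
pose f' a := match boolp.pselect (exists hm : G * nat, H hm.1 /\ a = hm.1 + y *+ hm.2) with
  | left e => let hm := sval (boolp.cid e) in f hm.1 * w ^+ hm.2
  | right _ => 1 end.
have f'E : forall h m, H h -> f' (h + y *+ m) = f h * w ^+ m.
  move=> h m Hh; rewrite /f'; case: boolp.pselect => [e|ne]; last first.
    by exfalso; apply: ne; exists (h, m).
  case: (boolp.cid e) => -[h0 m0] /= [Hh0 e0].
  by apply: wd => //; rewrite -e0.
pose H' a := exists hm : G * nat, H hm.1 /\ a = hm.1 + y *+ hm.2.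
exists H', f'; split.
- split.
  + split; first by exists (0, 0%N); split => //=; [case: sH | rewrite mulr0n addr0].
    move=> a b [[h1 m1] /= [H1 ->]] [[h2 m2] /= [H2 ->]].
    case: (torsion_opp tor y m2) => m2' e2.
    exists (h1 - h2, (m1 + m2')%N) => /=; split; first by apply: sH.2.
    have em : - (y *+ m2) = y *+ m2' by apply/eqP; rewrite eq_sym -addr_eq0 addrC e2.
    by rewrite opprD addrACA em mulrnDr.
  + move=> a b [[h1 m1] /= [H1 ->]] [[h2 m2] /= [H2 ->]].
    rewrite addrACA -mulrnDr !f'E //; last by apply: subgrpD.
    by rewrite hom // exprD mulrACA.
  + move=> a [[h1 m1] /= [H1 ->]].
    by rewrite f'E // normrM normrX nw expr1n mulr1 nrm.
- by move=> a Ha; exists (a, 0%N); rewrite /= mulr0n addr0.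
- by move=> a Ha; have := f'E a 0%N Ha; rewrite mulr0n addr0 expr0 mulr1.
- by exists (0, 1%N); rewrite /= add0r mulr1n; split => //; case: sH.
- by have := f'E 0 1%N sH.1; rewrite mulr1n add0r expr1 (pchar0 pc) mul1r.
Qed.


Lemma extend_total (tor : torsion G) H0 f0 : pchar H0 f0 ->
  exists chi, is_character chi /\ forall a, H0 a -> chi a = f0 a.
Proof.
move=> pc0.
pose ok (p : (G -> Prop) * (G -> R[i])) :=
  [/\ pchar p.1 p.2, (forall a, H0 a -> p.1 a) & (forall a, H0 a -> p.2 a = f0 a)].
pose P := {p | ok p}.
pose Rl (p q : P) : bool := boolp.asbool
  ((forall a, (sval p).1 a -> (sval q).1 a) /\
   (forall a, (sval p).1 a -> (sval q).2 a = (sval p).2 a)).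
have ok0 : ok (H0, f0) by split.
pose t0 : P := exist _ (H0, f0) ok0.
have [||A totA|m maxm] := @classical_sets.ZL_preorder P t0 Rl.
- by move=> t; apply/boolp.asboolP.
- move=> r s t /boolp.asboolP [rs1 rs2] /boolp.asboolP [st1 st2].
  apply/boolp.asboolP; split; first by move=> a /rs1/st1.
  by move=> a ra; rewrite st2 ?rs2 //; apply: rs1.
- case: (boolp.pselect (exists p, A p)) => [[p1 Ap1] | nA]; last first.
    by exists t0 => s As; exfalso; apply: nA; exists s.
  pose U a := exists p, A p /\ (sval p).1 a.
  pose F a := match boolp.pselect (U a) with
    | left e => (sval (sval (boolp.cid e))).2 a | right _ => 1 end.
  have FE : forall p a, A p -> (sval p).1 a -> F a = (sval p).2 a.
    move=> p a Ap pa; rewrite /F; case: boolp.pselect => [e|ne]; last first.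
      by exfalso; apply: ne; exists p.
    case: (boolp.cid e) => q [Aq qa] /=.
    case: (totA p q Ap Aq) => /boolp.asboolP [s1 s2]; last by rewrite s2.
    by rewrite s2.
  have big : forall p q, A p -> A q -> exists r, [/\ A r,
      (forall a, (sval p).1 a -> (sval r).1 a) & (forall a, (sval q).1 a -> (sval r).1 a)].
    move=> p q Ap Aq; case: (totA p q Ap Aq) => /boolp.asboolP [s1 s2].
      by exists q; split.
    by exists p; split.
  have okp : forall p : P, ok (sval p) by move=> p; exact: (svalP p).
  have okU : ok (U, F).
    split => /=.
    + split.
      * split.
          exists p1; split => //; case: (okp p1) => -[[]] //.
        move=> a b [p [Ap pa]] [q [Aq qb]]; case: (big p q Ap Aq) => r [Ar pr qr].
        exists r; split => //; case: (okp r) => -[[_ sub]] _ _ _ _; apply: sub; auto.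
      * move=> a b [p [Ap pa]] [q [Aq qb]]; case: (big p q Ap Aq) => r [Ar pr qr].
        case: (okp r) => -[sr hom _] _ _.
        have rab : (sval r).1 (a + b) by apply: (subgrpD sr); auto.
        rewrite (FE r _ Ar rab) (FE r _ Ar (pr _ pa)) (FE r _ Ar (qr _ qb)).
        by apply: hom; auto.
      * move=> a [p [Ap pa]]; rewrite (FE p) //; case: (okp p) => -[_ _ nrm] _ _.
        exact: nrm.
    + by move=> a Ha; exists p1; split => //; case: (okp p1) => _ sub _; apply: sub.
    + move=> a Ha; case: (okp p1) => _ sub ag.
      by rewrite (FE p1) ?ag //; apply: sub.
  exists (exist _ (U, F) okU) => s As; apply/boolp.asboolP; split => /=.
    by move=> a sa; exists s.
  by move=> a sa; rewrite (FE s).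
- have tot : forall y, (sval m).1 y.
    move=> y; case: (boolp.pselect ((sval m).1 y)) => // ny; exfalso.
    case: (svalP m) => pcm H0m agm.
    have hex : exists k, (0 < k)%N && boolp.asbool ((sval m).1 (y *+ k)).
      case: (tor y) => n n0 yn; exists n; rewrite n0 /=; apply/boolp.asboolP.
      by rewrite yn; case: pcm => -[].
    case: (ex_minnP hex) => d /andP[d0 /boolp.asboolP Hd] dmin.
    pose w := d.-root ((sval m).2 (y *+ d)).
    have nw : `|w| = 1.
      by rewrite /w norm_rootC; case: pcm => _ _ ->; rewrite ?rootC1.
    have wd : w ^+ d = (sval m).2 (y *+ d) by rewrite /w rootCK.
    have dm : forall k, (0 < k < d)%N -> ~ (sval m).1 (y *+ k).
      move=> k /andP[k0 kd] Hk.
      have := dmin k; rewrite k0 /=.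
      have -> : boolp.asbool ((sval m).1 (y *+ k)) by apply/boolp.asboolP.
      by move=> /(_ isT); rewrite leqNgt kd.
    have [H' [f' [pc' sub ag H'y _]]] := ext_step tor pcm d0 Hd dm nw wd.
    have oks : ok (H', f').
      split => //=; first by move=> a /H0m /sub.
      by move=> a Ha; rewrite ag ?agm //; apply: H0m.
    have := maxm (exist _ (H', f') oks).
    have -> : Rl m (exist _ (H', f') oks) by apply/boolp.asboolP; split.
    by move=> /(_ isT) /boolp.asboolP [/= s1 _]; apply: ny; apply: s1.
  case: (svalP m) => -[sm hom nrm] _ agm.
  exists (sval m).2; split; last by [].
  by split => [x|x y]; [apply: nrm | apply: hom].
Qed.


Lemma separate (tor : torsion G) T x : subgrp T -> ~ T x ->
  exists chi, [/\ is_character chi, (forall a, T a -> chi a = 1) & chi x != 1].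
Proof.
move=> sT nTx.
have pc0 : pchar T (fun _ => 1) by split => // a b; rewrite ?mulr1 ?normr1.
have hex : exists k, (0 < k)%N && boolp.asbool (T (x *+ k)).
  case: (tor x) => n n0 xn; exists n; rewrite n0 /=; apply/boolp.asboolP.
  by rewrite xn; case: sT.
case: (ex_minnP hex) => d /andP[d0 /boolp.asboolP Hd] dmin.
have dm : forall k, (0 < k < d)%N -> ~ T (x *+ k).
  move=> k /andP[k0 kd] Hk.
  have := dmin k; rewrite k0 /=.
  have -> : boolp.asbool (T (x *+ k)) by apply/boolp.asboolP.
  by move=> /(_ isT); rewrite leqNgt kd.
have d1 : (1 < d)%N.
  rewrite ltn_neqAle d0 andbT; apply/eqP => d1; apply: nTx.
  by rewrite -[x]mulr1n d1.
have [|w /eqP pw0] := closed_rootP (\poly_(i < d) (1 : R[i])) _.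
  by rewrite size_poly_eq ?oner_eq0 // -(subnKC d1).
rewrite horner_poly (eq_bigr _ (fun _ _ => mul1r _)) in pw0.
have wd1 : w ^+ d = 1 by apply/eqP; rewrite -subr_eq0 subrX1 pw0 mulr0.
have w1 : w != 1.
  apply/eqP => w1; move: pw0; rewrite w1 (eq_bigr _ (fun _ _ => expr1n _ _)).
  rewrite sumr_const card_ord => /eqP; rewrite pnatr_eq0 => /eqP d00.
  by rewrite d00 in d0.
have nw : `|w| = 1.
  by apply/eqP; rewrite -(pexpr_eq1 d0 (normr_ge0 w)) -normrX wd1 normr1.
have [H1 [f1 [pc1 sub ag H1x f1x]]] := ext_step tor pc0 d0 Hd dm nw wd1.
have [chi [ch agc]] := extend_total tor pc1.
exists chi; split => //.
  by move=> a Ta; rewrite agc ?ag //; apply: sub.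
by rewrite agc // f1x.
Qed.


Definition additive (psi : G -> G) := forall x y, psi (x + y) = psi x + psi y.

Lemma add0 psi : additive psi -> psi 0 = 0.
Proof. by move=> ha; apply: (addIr (psi 0)); rewrite -ha !addr0 add0r. Qed.

Lemma addN psi x : additive psi -> psi (- x) = - psi x.
Proof. by move=> ha; apply: (addIr (psi x)); rewrite -ha !addNr add0. Qed.

Lemma addB psi x y : additive psi -> psi (x - y) = psi x - psi y.
Proof. by move=> ha; rewrite ha addN. Qed.

Lemma addMn psi x m : additive psi -> psi (x *+ m) = psi x *+ m.
Proof.
move=> ha; elim: m => [|m IH]; first by rewrite !mulr0n add0.
by rewrite !mulrS ha IH.
Qed.

Lemma iter_add psi k : additive psi -> additive (iter k psi).
Proof. by move=> ha; elim: k => [//|k IH] x y /=; rewrite IH ha. Qed.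

Lemma inv_add phi phiinv : additive phi -> cancel phi phiinv -> cancel phiinv phi ->
  additive phiinv.
Proof.
by move=> ha c1 c2 x y; rewrite -{1}(c2 x) -{1}(c2 y) -ha c1.
Qed.

Lemma iter_dual phi k chi :
  iter k (dual_map phi) chi = fun x => chi (iter k phi x).
Proof.
elim: k => [//|k IH] /=; rewrite IH; apply: boolp.funext => x.
by rewrite /dual_map -iterSr.
Qed.

Lemma char_comp chi psi : is_character chi -> additive psi ->
  is_character (fun x => chi (psi x)).
Proof. by move=> [n h] ha; split => // x y; rewrite ha h. Qed.

Lemma unit_circle (z : R[i]) n : (0 < n)%N -> z ^+ n = 1 ->
  (forall m, `|z ^+ m - 1| < 1) -> z = 1.
Proof.
move=> n0 zn hm; apply/eqP; apply/negP => /negP z1.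
have s0 : \sum_(i < n) z ^+ i = 0.
  have : (z - 1) * \sum_(i < n) z ^+ i = 0 by rewrite -subrX1 zn subrr.
  by move/eqP; rewrite mulf_eq0 subr_eq0 (negbTE z1) /= => /eqP.
have : \sum_(i < n) (z ^+ i - 1) = - (n%:R).
  by rewrite sumrB s0 sumr_const card_ord sub0r.
move=> e.
have : `|\sum_(i < n) (z ^+ i - 1)| < n%:R.
  apply: (le_lt_trans (ler_norm_sum _ _ _)).
  have -> : (n%:R : R[i]) = \sum_(i < n) 1 by rewrite sumr_const card_ord.
  apply: ltr_sum => [|i _]; last exact: hm.
  by apply/hasP; exists (Ordinal n0); rewrite ?mem_index_enum.
by rewrite e normrN normr_nat ltxx.
Qed.

Lemma kill (tor : torsion G) chi psi S : is_character chi -> additive psi -> subgrp S ->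
  (forall x, S x -> `|chi (psi x) - 1| < 1) -> forall x, S x -> chi (psi x) = 1.
Proof.
move=> ch ha sS hS x Sx.
case: (tor x) => n n0 xn.
apply: (unit_circle n0).
  by rewrite -charMn // -addMn // xn add0 // char0.
by move=> m; rewrite -charMn // -addMn //; apply: hS; apply: subgrpMn.
Qed.


Definition gsum psi lo n (s : nat -> G) := \sum_(lo <= k < n.+1) iter k psi (s k).
Definition pad n (s : nat -> G) k := if (k <= n)%N then s k else 0.

Lemma iter0 psi k : additive psi -> iter k psi 0 = 0.
Proof. by move=> ha; apply: add0; apply: iter_add. Qed.

Lemma gsum_pad psi lo n N s : additive psi -> (lo <= 1)%N -> (n <= N)%N ->
  gsum psi lo n s = gsum psi lo N (pad n s).
Proof.
move=> ha lo1 nN; rewrite /gsum (@big_cat_nat _ _ _ n.+1 lo N.+1) //=;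
  try by apply: leq_trans lo1 _.
rewrite [X in _ = _ + X]big1_seq ?addr0; last first.
  move=> k /andP[_]; rewrite mem_index_iota => /andP[nk _].
  by rewrite /pad leqNgt nk /= iter0.
by apply: eq_big_nat => k /andP[_ kn]; rewrite /pad -ltnS kn.
Qed.

Lemma gsum_sub psi lo n s t : additive psi ->
  gsum psi lo n s - gsum psi lo n t = gsum psi lo n (fun k => s k - t k).
Proof.
by move=> ha; rewrite /gsum -sumrB; apply: eq_bigr => k _; rewrite addB //; apply: iter_add.
Qed.

Lemma gsum0 psi lo n : additive psi -> gsum psi lo n (fun _ => 0) = 0.
Proof. by move=> ha; rewrite /gsum big1 // => k _; rewrite iter0. Qed.

Lemma gsum_pt psi lo k a : additive psi -> (lo <= k)%N ->
  gsum psi lo k (fun j => if j == k then a else 0) = iter k psi a.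
Proof.
move=> ha lk; rewrite /gsum big_nat_recr //= eqxx big1_seq ?add0r //.
move=> j /andP[_]; rewrite mem_index_iota => /andP[_ jk].
by rewrite (ltn_eqF jk) iter0.
Qed.

Lemma gsum_char chi psi lo n s : is_character chi ->
  (forall k, (lo <= k <= n)%N -> chi (iter k psi (s k)) = 1) -> chi (gsum psi lo n s) = 1.
Proof.
move=> ch h; rewrite /gsum char_sum // big1_seq // => k /andP[_].
by rewrite mem_index_iota ltnS; apply: h.
Qed.

Lemma posE phi S n x : in_pos_trajectory phi S n x <->
  exists s, (forall k, (k <= n)%N -> S (s k)) /\ x = gsum phi 0 n s.
Proof. by split => -[s [h e]]; exists s; split => //; rewrite e /gsum big_mkord. Qed.

Lemma twoE phi phiinv S n x : in_trajectory phi phiinv S n x <->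
  exists s t, (forall k, (k <= n)%N -> S (s k) /\ S (t k)) /\
     x = gsum phi 0 n s + gsum phiinv 1 n t.
Proof. by split => -[s [t [h e]]]; exists s, t; split => //; rewrite e /gsum big_mkord. Qed.


Lemma modMn (a : G) n i : a *+ n = 0 -> a *+ i = a *+ (i %% n)%N.
Proof. by move=> an; rewrite {1}(divn_eq i n) mulrnDr mulnC mulrnA an mul0rn add0r. Qed.

Lemma oppMn (tor : torsion G) (a : G) j : exists j', - (a *+ j) = a *+ j'.
Proof.
case: (torsion_opp tor a j) => j' e; exists j'.
by apply/eqP; rewrite eq_sym -addr_eq0 addrC e.
Qed.

Lemma cyclic_fs (tor : torsion G) (x : G) : exists F : G -> Prop, finite_subgroup F /\ F x.
Proof.
case: (tor x) => n n0 xn.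
exists (fun y => exists i, y = x *+ i); split; last by exists 1%N; rewrite mulr1n.
split.
- by exists 0%N; rewrite mulr0n.
- move=> a b [i ->] [j ->]; case: (oppMn tor x j) => j' ->.
  by exists (i + j')%N; rewrite mulrnDr.
- exists [seq x *+ i | i <- iota 0 n] => y; split.
    move=> [i ->]; rewrite (modMn i xn); apply: map_f.
    by rewrite mem_iota add0n ltn_pmod.
  by move/mapP => [i _ ->]; exists i.
Qed.

Fixpoint gen N (l : seq G) : seq G :=
  if l is a :: l' then [seq a *+ i + s | i <- iota 0 N, s <- gen N l'] else [:: 0].

Lemma gen_fs (tor : torsion G) (l : seq G) : exists S : G -> Prop, finite_subgroup S /\ forall a, a \in l -> S a.
Proof.
have [N [N0 hN]] : exists N, (0 < N)%N /\ forall a, a \in l -> a *+ N = 0.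
  elim: l => [|a l [N [N0 hN]]]; first by exists 1%N.
  case: (tor a) => n n0 an; exists (n * N)%N; split; first by rewrite muln_gt0 n0.
  move=> b; rewrite inE => /orP[/eqP ->|bl]; first by rewrite mulrnA an mul0rn.
  by rewrite mulnC mulrnA hN // mul0rn.
have memI : forall a l' i s, a *+ N = 0 -> s \in gen N l' -> a *+ i + s \in gen N (a :: l').
  move=> a l' i s aN sl /=; apply/allpairsP; exists ((i %% N)%N, s) => /=; split => //.
    by rewrite mem_iota add0n ltn_pmod.
  by rewrite -modMn.
have key : forall l', (forall a, a \in l' -> a *+ N = 0) ->
   [/\ 0 \in gen N l', (forall y z, y \in gen N l' -> z \in gen N l' -> y - z \in gen N l')
     & forall a, a \in l' -> a \in gen N l'].
  elim => [|a l' IH] hl /=.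
    split; [by rewrite inE | | by []].
    by move=> y z; rewrite !inE => /eqP -> /eqP ->; rewrite subrr.
  have aN : a *+ N = 0 by apply: hl; rewrite inE eqxx.
  have hl' : forall b, b \in l' -> b *+ N = 0 by move=> b bl; apply: hl; rewrite inE bl orbT.
  have [g0 gs gl] := IH hl'.
  split.
  - by have := memI a l' 0%N 0 aN g0; rewrite mulr0n addr0.
  - move=> y z /allpairsP [[i s] /= [_ sg ->]] /allpairsP [[j t] /= [_ tg ->]].
    case: (oppMn tor a j) => j' ej.
    have -> : a *+ i + s - (a *+ j + t) = a *+ (i + j') + (s - t).
      by rewrite opprD addrACA ej mulrnDr.
    by apply: memI => //; apply: gs.
  - move=> b; rewrite inE => /orP[/eqP ->|bl].
      by have := memI a l' 1%N 0 aN g0; rewrite mulr1n addr0.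
    by have := memI a l' 0%N b aN (gl b bl); rewrite mulr0n add0r.
have [g0 gs gl] := key l hN.
exists (fun y => y \in gen N l); split => //.
by split => //; exists (gen N l).
Qed.

Lemma seq_bound (Tr : nat -> G -> Prop) (l : seq G) :
  (forall n N x, Tr n x -> (n <= N)%N -> Tr N x) ->
  (forall x, x \in l -> exists n, Tr n x) -> exists N, forall x, x \in l -> Tr N x.
Proof.
move=> mono; elim: l => [|a l IH] h; first by exists 0%N.
have h' : forall x, x \in l -> exists n, Tr n x by move=> x xl; apply: h; rewrite inE xl orbT.
have [N hN] := IH h'.
have [n hn] := h a (mem_head a l).
exists (maxn n N) => x; rewrite inE => /orP[/eqP ->|xl].
  by apply: mono hn _; apply: leq_maxl.
by apply: mono (hN x xl) _; apply: leq_maxr.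
Qed.


Lemma A_pos (tor : torsion G) phi : additive phi -> alg_pos_expansive phi -> top_pos_expansive R phi.
Proof.
move=> ha [S [S0 Ssub [s Ss]] hexp].
have sS : subgrp S by split.
exists (fun f => forall x, x \in s -> `|f x - 1| < 1).
  by exists s, 1; split; [exact: ltr01 | move=> chi _ h x xs; apply: h].
move=> chi ch; split; last first.
  by move=> -> k; rewrite iter_dual => x _; rewrite /triv_char subrr normr0 ltr01.
move=> hU.
have kS : forall k x, S x -> chi (iter k phi x) = 1.
  move=> k; apply: (kill tor ch (iter_add k ha) sS) => x Sx.
  by have := hU k; rewrite iter_dual; apply; apply/Ss.
apply: boolp.funext => x; rewrite /triv_char.
have [F [fF Fx]] := cyclic_fs tor x.
have [n hn] := hexp F fF.
have /posE [t [ht ->]] := hn x Fx.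
by apply: gsum_char => // k /andP[_ kn]; apply: kS; apply: ht.
Qed.

Lemma A_two (tor : torsion G) phi phiinv : additive phi -> additive phiinv ->
  alg_expansive phi phiinv -> top_expansive R phi phiinv.
Proof.
move=> ha hai [S [S0 Ssub [s Ss]] hexp].
have sS : subgrp S by split.
exists (fun f => forall x, x \in s -> `|f x - 1| < 1).
  by exists s, 1; split; [exact: ltr01 | move=> chi _ h x xs; apply: h].
move=> chi ch; split; last first.
  by move=> -> k; rewrite !iter_dual; split => x _; rewrite /triv_char subrr normr0 ltr01.
move=> hU.
have kS : forall k x, S x -> chi (iter k phi x) = 1.
  move=> k; apply: (kill tor ch (iter_add k ha) sS) => x Sx.
  by have := (hU k).1; rewrite iter_dual; apply; apply/Ss.
have kSi : forall k x, S x -> chi (iter k phiinv x) = 1.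
  move=> k; apply: (kill tor ch (iter_add k hai) sS) => x Sx.
  by have := (hU k).2; rewrite iter_dual; apply; apply/Ss.
apply: boolp.funext => x; rewrite /triv_char.
have [F [fF Fx]] := cyclic_fs tor x.
have [n hn] := hexp F fF.
have /twoE [t [u [ht ->]]] := hn x Fx.
case: (ch) => _ hom; rewrite hom.
rewrite (gsum_char (s:=t)) // ?(gsum_char (s:=u)) ?mulr1 //.
  by move=> k /andP[_ kn]; apply: kSi; case: (ht k kn).
by move=> k /andP[_ kn]; apply: kS; case: (ht k kn).
Qed.


Lemma eps_pos (eps : R) : 0 < eps -> `|(0 : R[i])| < (eps%:C)%C.
Proof. by move=> e0; rewrite normr0; have : ((0%:C)%C < (eps%:C)%C :> R[i]) by rewrite ltcR. Qed.

Lemma B_pos (tor : torsion G) phi : additive phi -> top_pos_expansive R phi -> alg_pos_expansive phi.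
Proof.
move=> ha [U [F0 [eps [eps0 hN]]] htop].
have [S [[S0 Ssub [s Ss]] F0S]] := gen_fs tor F0.
have sS : subgrp S by split.
pose Tr n x := exists s, (forall k, (k <= n)%N -> S (s k)) /\ x = gsum phi 0 n s.
have mono : forall n N x, Tr n x -> (n <= N)%N -> Tr N x.
  move=> n N x [t [ht ->]] nN; exists (pad n t); split; last exact: gsum_pad.
  by move=> k _; rewrite /pad; case: ifP => [kn|_]; [exact: ht | exact: S0].
have sT : subgrp (fun x => exists n, Tr n x).
  split; first by exists 0%N, (fun _ => 0); split => //; rewrite gsum0.
  move=> x y [n1 Tx] [n2 Ty].
  have [t1 [h1 ->]] := mono _ _ _ Tx (leq_maxl n1 n2).
  have [t2 [h2 ->]] := mono _ _ _ Ty (leq_maxr n1 n2).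
  exists (maxn n1 n2), (fun k => t1 k - t2 k); split; last exact: gsum_sub.
  by move=> k kn; apply: Ssub; [apply: h1 | apply: h2].
have allT : forall x, exists n, Tr n x.
  move=> x; case: (boolp.pselect (exists n, Tr n x)) => // nT; exfalso.
  have [chi [ch chiT chix]] := separate tor sT nT.
  have : chi = @triv_char R G.
    apply/(htop chi ch) => k; rewrite iter_dual; apply: hN.
      exact: char_comp (iter_add k ha).
    move=> a aF0; rewrite chiT ?subrr ?eps_pos //.
    exists k, (fun j => if j == k then a else 0); split; last by rewrite gsum_pt.
    by move=> j _; case: ifP => _; [apply: F0S | exact: S0].
  by move=> e; move: chix; rewrite e /triv_char eqxx.
exists S; first by split => //; exists s.
move=> F [F0' Fsub [f Ff]].
have [N hNf] := seq_bound mono (l:=f) (fun x _ => allT x).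
by exists N => x Fx; apply/posE; apply: hNf; apply/Ff.
Qed.

Lemma B_two (tor : torsion G) phi phiinv : additive phi -> additive phiinv ->
  top_expansive R phi phiinv -> alg_expansive phi phiinv.
Proof.
move=> ha hai [U [F0 [eps [eps0 hN]]] htop].
have [S [[S0 Ssub [s Ss]] F0S]] := gen_fs tor F0.
have sS : subgrp S by split.
pose Tr n x := exists s t, (forall k, (k <= n)%N -> S (s k) /\ S (t k)) /\
     x = gsum phi 0 n s + gsum phiinv 1 n t.
have mono : forall n N x, Tr n x -> (n <= N)%N -> Tr N x.
  move=> n N x [t [u [ht ->]]] nN; exists (pad n t), (pad n u); split.
    by move=> k _; rewrite /pad; case: ifP => [kn|_]; [exact: ht | split; exact: S0].
  by rewrite (gsum_pad (lo:=0) t ha _ nN) // (gsum_pad (lo:=1) u hai _ nN).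
have sT : subgrp (fun x => exists n, Tr n x).
  split; first by exists 0%N, (fun _ => 0), (fun _ => 0); split => //; rewrite !gsum0 ?addr0.
  move=> x y [n1 Tx] [n2 Ty].
  have [t1 [u1 [h1 ->]]] := mono _ _ _ Tx (leq_maxl n1 n2).
  have [t2 [u2 [h2 ->]]] := mono _ _ _ Ty (leq_maxr n1 n2).
  exists (maxn n1 n2), (fun k => t1 k - t2 k), (fun k => u1 k - u2 k); split.
    move=> k kn; case: (h1 k kn) => a1 b1; case: (h2 k kn) => a2 b2.
    by split; apply: Ssub.
  by rewrite opprD addrACA !gsum_sub.
have delta : forall (a : G) (k : nat), S a -> forall j : nat, S (if j == k then a else 0).
  by move=> a k Sa j; case: ifP.
have allT : forall x, exists n, Tr n x.
  move=> x; case: (boolp.pselect (exists n, Tr n x)) => // nT; exfalso.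
  have [chi [ch chiT chix]] := separate tor sT nT.
  have : chi = @triv_char R G.
    apply/(htop chi ch) => k; rewrite !iter_dual; split; apply: hN.
    - exact: char_comp (iter_add k ha).
    - move=> a aF0; rewrite chiT ?subrr ?eps_pos //.
      exists k, (fun j => if j == k then a else 0), (fun _ => 0); split.
        by move=> j _; split; [apply: delta; apply: F0S | exact: S0].
      by rewrite gsum_pt // gsum0 // addr0.
    - exact: char_comp (iter_add k hai).
    - move=> a aF0; rewrite chiT ?subrr ?eps_pos //.
      case: k => [|k].
        exists 0%N, (fun j => if j == 0%N then a else 0), (fun _ => 0); split.
          by move=> j _; split; [apply: delta; apply: F0S | exact: S0].
        by rewrite gsum_pt // gsum0 // addr0.
      exists k.+1, (fun _ => 0), (fun j => if j == k.+1 then a else 0); split.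
        by move=> j _; split; [exact: S0 | apply: delta; apply: F0S].
      by rewrite gsum_pt // gsum0 // add0r.
  by move=> e; move: chix; rewrite e /triv_char eqxx.
exists S; first by split => //; exists s.
move=> F [F0' Fsub [f Ff]].
have [N hNf] := seq_bound mono (l:=f) (fun x _ => allT x).
by exists N => x Fx; apply/twoE; apply: hNf; apply/Ff.
Qed.

End Infra.

Theorem theorem5p1 (R : realType) (G : zmodType) (phi : G -> G)
  (hG : torsion G) (hphi : forall x y : G, phi (x + y) = phi x + phi y) :
  (alg_pos_expansive phi <-> top_pos_expansive R phi) /\
  (forall phiinv : G -> G, cancel phi phiinv -> cancel phiinv phi ->
     (alg_expansive phi phiinv <-> top_expansive R phi phiinv)).
Proof.
split; first by split; [apply: A_pos | apply: B_pos].
move=> phiinv c1 c2; have hai := inv_add hphi c1 c2.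
by split; [apply: A_two | apply: B_two].
Qed.
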